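(* Let $n\ge 2$ and let $G$ be a graph on $2n+1$ vertices with at least $n^2+n$ edges that contains no two distinct vertices of the same degree joined by a path of length three. Let $\beta$ be the largest integer such that $G$ contains two distinct vertices of degree $\beta$, and let $u,v$ be two distinct vertices with $d(u)=d(v)=\beta$. Let $\mathbf{1}_{uv}=1$ if $uv\in E(G)$ and $\mathbf{1}_{uv}=0$ otherwise, and set $c=\beta-n-\mathbf{1}_{uv}$. If $c\ge 1$, then \[ e(\overline{G})\ge n^2+c^2-c-\mathbf{1}_{uv}, \] where $e(\overline{G})$ is the number of edges of the complement graph $\overline{G}$.
   Context: A path of length three joining vertices $a$ and $b$ is a path $a\,x\,y\,b$ with four distinct vertices and three edges. $\overline{G}$ denotes the complement of $G$. Graphs are finite and simple. *)

(* Defs.v *)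
From mathcomp Require Import all_boot.
Set Implicit Arguments. Unset Strict Implicit. Unset Printing Implicit Defensive.

Section Graph.
Variable T : finType.
Variable e : rel T.

Definition simple_graph : Prop := symmetric e /\ irreflexive e.

Definition deg (x : T) : nat := #|[set y | e x y]|.

Definition nedges : nat :=
  #|[set A : {set T} | [exists x, exists y, [&& x != y, e x y & A == [set x; y]]]]|.

Definition nedges_compl : nat :=
  #|[set A : {set T} | [exists x, exists y, [&& x != y, ~~ e x y & A == [set x; y]]]]|.

Definition path3 (a b : T) : Prop :=
  exists x y : T, [/\ uniq [:: a; x; y; b], e a x, e x y & e y b].

Definition ind (u v : T) : nat := if e u v then 1 else 0.
End Graph.

(* Main.v *)
Require Import Defs.
From mathcomp Require Import all_boot zify.
Set Implicit Arguments. Unset Strict Implicit. Unset Printing Implicit Defensive.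

Lemma handshake (T : finType) (r : rel T) : symmetric r ->
  2 * #|[set A : {set T} | [exists x, exists y, [&& x != y, r x y & A == [set x; y]]]]|
  = \sum_x #|[set y | (x != y) && r x y]|.
Proof.
move=> rs.
set E := [set A : {set T} | _].
have -> : \sum_x #|[set y | (x != y) && r x y]| =
   \sum_(p : T * T | (p.1 != p.2) && r p.1 p.2) 1.
  rewrite (eq_bigr (fun x => \sum_(y | (x != y) && r x y) 1)); last first.
    by move=> x _; rewrite -sum1_card; apply: eq_bigl => y; rewrite inE.
  by rewrite pair_big_dep.
rewrite (partition_big (fun p : T * T => [set p.1; p.2]) (mem E)); last first.
  move=> [x y] /= /andP [xy rxy]; rewrite inE.
  by apply/existsP; exists x; apply/existsP; exists y; rewrite xy rxy eqxx.
rewrite mulnC -sum_nat_const; apply: eq_bigr => S.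
rewrite inE => /existsP [x /existsP [y /and3P [xy rxy /eqP ->]]].
rewrite (eq_bigl (mem [set (x, y); (y, x)])).
  rewrite sum1_card cards2.
  by have -> : (x, y) != (y, x) by apply: contra xy => /eqP [->].
move=> [a b] /=; rewrite !inE.
apply/idP/idP.
  move=> /andP [/andP [ab rab] /eqP Hs].
  have : a \in [set x; y] by rewrite -Hs !inE eqxx.
  have : b \in [set x; y] by rewrite -Hs !inE eqxx orbT.
  rewrite !inE => /orP [] /eqP hb /orP [] /eqP ha; rewrite ha hb in ab *;
    by rewrite ?eqxx ?orbT // in ab *.
case/orP => /eqP [-> ->]; rewrite ?xy ?rxy //=.
  by rewrite eq_sym xy rs rxy setUC eqxx.
Qed.
Lemma pigeon (T : finType) (S : {set T}) (f : T -> nat) (b : nat) :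
  (forall x, x \in S -> f x <= b) -> b.+1 < #|S| ->
  exists x y, [/\ x \in S, y \in S, x != y & f x = f y].
Proof.
move=> fb hS.
case: (boolP [exists x in S, exists y in S, (x != y) && (f x == f y)]).
  move=> /exists_inP [x xS /exists_inP [y yS /andP [xy /eqP fxy]]].
  by exists x, y.
move=> H.
have U : uniq (map f (enum S)).
  rewrite map_inj_in_uniq ?enum_uniq //.
  move=> x y; rewrite !mem_enum => xS yS fxy.
  apply/eqP; apply: contraNT H => xy.
  by apply/exists_inP; exists x => //; apply/exists_inP; exists y => //; rewrite xy fxy eqxx.
have := uniq_leq_size U (s2 := iota 0 b.+1).
rewrite size_map -cardE size_iota => h.
have : #|S| <= b.+1.
  apply: h => z /mapP [x]; rewrite mem_enum => xS ->.
  by rewrite mem_iota /= add0n ltnS fb.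
by rewrite leqNgt hS.
Qed.

Lemma sumn_sub (s r : seq nat) : uniq s -> uniq r -> {subset s <= r} -> sumn s <= sumn r.
Proof.
move=> us ur sr.
have P : perm_eq s (filter (mem s) r).
  apply: uniq_perm => //; first by rewrite filter_uniq.
  by move=> x; rewrite mem_filter; apply/idP/andP => [xs|[]//]; split => //; apply: sr.
have Q : perm_eq ([seq x <- r | mem s x] ++ [seq x <- r | predC (mem s) x]) r.
  by rewrite perm_filterC.
rewrite (perm_sumn P) -(perm_sumn Q) sumn_cat.
exact: leq_addr.
Qed.

Lemma sumn_iota1 t : 2 * sumn (iota 1 t) = t * t.+1.
Proof.
elim: t => [//|t IH].
have -> : iota 1 t.+1 = iota 1 t ++ [:: t.+1] by rewrite -[t.+1]addn1 iotaD /= add1n addn1.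
rewrite sumn_cat /= addn0 mulnDr IH. lia.
Qed.

Lemma cardsU_disj (T : finType) (X Y : {set T}) :
  (forall z, z \in X -> z \in Y -> False) -> #|X :|: Y| = #|X| + #|Y|.
Proof.
move=> H; rewrite cardsU.
have -> : X :&: Y = set0.
  apply/setP => z; rewrite !inE; apply/negbTE/negP => /andP [h1 h2]; exact: H h1 h2.
by rewrite cards0 subn0.
Qed.

Lemma claim (T : finType) (e : rel T) (I W : {set T}) :
  irreflexive e -> #|W| + 2 <= #|I| ->
  (forall x y a b, x \in I -> y \in I -> x != y ->
     #|[set z | e x z] :&: W| = #|[set z | e y z] :&: W| ->
     a \in W -> b \in W -> a != b -> e x a -> e a b -> e y b -> False) ->
  2 * \sum_(x in I) #|[set z | e x z] :&: W| + \sum_(a in W) #|[set z | e a z] :&: W|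
    <= 2 * #|I| * #|W|.
Proof.
move=> eirr hIW noP.
set dW := fun x => #|[set z | e x z] :&: W|.
rewrite -/(dW _).
have dWw : forall x, dW x <= #|W| by move=> x; apply: subset_leq_card; apply: subsetIr.
pose P k := [exists x in I, exists y in I, (x != y) && (dW x == k) && (dW y == k)].
have exP : exists k, P k.
  have hw : #|W|.+1 < #|I| by rewrite -addn2.
  have [x [y [xI yI xy dxy]]] := pigeon (fun x _ => dWw x) hw.
  exists (dW x); apply/exists_inP; exists x => //; apply/exists_inP; exists y => //.
  by rewrite xy dxy eqxx.
have ubP : forall k, P k -> k <= #|W|.
  by move=> k /exists_inP [x _ /exists_inP [y _ /andP [/andP [_ /eqP <-] _]]].
case: (ex_maxnP exP ubP) => D /exists_inP [x0 x0I /exists_inP [y0 y0I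
   /andP [/andP [x0y0 /eqP dx0] /eqP dy0]]] maxD.
have Hmax : forall x y, x \in I -> y \in I -> x != y -> dW x = dW y -> dW x <= D.
  move=> x y xI yI xy dxy; apply: maxD; apply/exists_inP; exists x => //.
  by apply/exists_inP; exists y => //; rewrite xy dxy eqxx.
have hW : \sum_(a in W) dW a <= D * (#|W| - D) + (#|W| - D) * (#|W| - 1).
  rewrite (bigID (fun a => e x0 a)) /=.
  apply: leq_add.
    apply: (@leq_trans (\sum_(a in W | e x0 a) (#|W| - D))); last first.
      rewrite -dx0 -sum_nat_const; apply: eq_leq; apply: eq_bigl => a.
      by rewrite !inE andbC.
    apply: leq_sum => a /andP [aW x0a].
    have aa : a \notin [set z | e a z] :&: W by rewrite !inE eirr.
    have h1 : #|([set z | e a z] :&: W) :|: (([set z | e y0 z] :&: W) :\ a)| <= #|W :\ a|.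
      apply: subset_leq_card; apply/subsetP => b; rewrite !inE.
      case/orP => [/andP [ab bW]|/and3P [ba _ bW]]; rewrite bW andbT //.
      by apply: contraTneq ab => ->; rewrite eirr.
    rewrite cardsU_disj in h1; last first.
      move=> b; rewrite !inE => /andP [ab bW] /and3P [ba y0b _].
      have hd : #|[set z | e x0 z] :&: W| = #|[set z | e y0 z] :&: W|.
        by rewrite -/(dW x0) -/(dW y0) dx0 dy0.
      have hab : a != b by rewrite eq_sym.
      exact: (noP x0 y0 a b x0I y0I x0y0 hd aW bW hab x0a ab y0b).
    have h2 := cardsD1 a W; have h3 := cardsD1 a ([set z | e y0 z] :&: W).
    have h4 : (a \in [set z | e y0 z] :&: W) <= 1 by case: (a \in _).
    rewrite aW /= in h2; move: dy0; rewrite /dW => dy0; lia.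
  apply: (@leq_trans (\sum_(a in W | ~~ e x0 a) (#|W| - 1))); last first.
    have -> : #|W| - D = #|W :\: [set z | e x0 z]| by rewrite cardsD setIC -/(dW x0) dx0.
    rewrite -sum_nat_const; apply: eq_leq; apply: eq_bigl => a; rewrite !inE andbC //.
  apply: leq_sum => a /andP [aW _].
  have h2 := cardsD1 a W; rewrite aW in h2.
  have : #|[set z | e a z] :&: W| <= #|W :\ a|.
    apply: subset_leq_card; apply/subsetP => b; rewrite !inE => /andP [ab ->].
    by rewrite andbT; apply: contraTneq ab => ->; rewrite eirr.
  rewrite /dW; lia.
have hI : \sum_(x in I) dW x <= #|I| * D + sumn (iota 1 (#|W| - D)).
  apply: (@leq_trans (\sum_(x in I) (D + (dW x - D)))).
    by apply: leq_sum => x _; lia.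
  rewrite big_split /= sum_nat_const leq_add2l.
  rewrite (bigID (fun x => D < dW x)) /= addnC big1 ?add0n; last first.
    by move=> x /andP [_ h]; apply/eqP; rewrite subn_eq0 leqNgt h.
  set Ps := [set x in I | D < dW x].
  rewrite (eq_bigl (mem Ps)); last by move=> x; rewrite !inE.
  rewrite -big_enum -(big_map (fun x => dW x - D) xpredT id) -sumnE.
  apply: sumn_sub; last 1 first.
  - move=> z /mapP [x]; rewrite mem_enum !inE => /andP [_ hx] ->.
    have := dWw x; rewrite mem_iota; lia.
  - rewrite map_inj_in_uniq ?enum_uniq //.
    move=> x y; rewrite !mem_enum !inE => /andP [xI hx] /andP [yI hy] hxy.
    apply/eqP; apply/negPn/negP => xy.
    have := Hmax x y xI yI xy; lia.
  - exact: iota_uniq.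
have hS := sumn_iota1 (#|W| - D).
have hD : D <= #|W| by apply: ubP; apply/exists_inP; exists x0 => //; apply/exists_inP; exists y0 => //; rewrite x0y0 dx0 dy0 eqxx.
move: hW hI hS hD hIW.
set S := sumn _; set w := #|W|; set i := #|I|; set SI := \sum_(x in I) _; set SW := \sum_(x in W) _.
clearbody S w i SI SW.
move=> hW hI hS hD hIW.
have [t ht] : exists t, w = D + t by exists (w - D); lia.
subst w.
rewrite (_ : D + t - D = t) in hW hS; last by lia.
nia.
Qed.

Lemma card_setI_sum (T : finType) (e : rel T) (a : T) (Y : {set T}) :
  #|[set y | e a y] :&: Y| = \sum_(y in Y) (e a y : nat).
Proof.
rewrite -sum1_card big_mkcond /= [RHS]big_mkcond /=; apply: eq_bigr => y _.
by rewrite !inE; case: (y \in Y); case: (e a y).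
Qed.

Lemma double_count (T : finType) (e : rel T) (X Y : {set T}) : symmetric e ->
  \sum_(a in X) #|[set y | e a y] :&: Y| = \sum_(x in Y) #|[set y | e x y] :&: X|.
Proof.
move=> es.
rewrite (eq_bigr (fun a => \sum_(y in Y) (e a y : nat))); last by move=> a _; exact: card_setI_sum.
rewrite exchange_big /=; apply: eq_bigr => x _; rewrite card_setI_sum.
by apply: eq_bigr => a _; rewrite es.
Qed.

Lemma compl_count (T : finType) (e : rel T) : simple_graph e ->
  2 * nedges_compl e + \sum_x deg e x = #|T| * (#|T| - 1).
Proof.
move=> [es eirr].
have hs : symmetric (fun x y => ~~ e x y) by move=> x y; rewrite es.
rewrite /nedges_compl (handshake hs) -big_split /=.
rewrite -{1}[#|T|]sum1_card big_distrl /=; apply: eq_bigr => x _; rewrite mul1n.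
have h1 : #|[set y | (x != y) && ~~ e x y]| + #|[set y | e x y] :|: [set x]| = #|T|.
  have -> : [set y | (x != y) && ~~ e x y] = ~: ([set y | e x y] :|: [set x]).
    by apply/setP => y; rewrite !inE negb_or eq_sym andbC.
  by rewrite addnC cardsC.
rewrite cardsU_disj in h1; last by move=> z; rewrite !inE => h /eqP hz; rewrite hz eirr in h.
rewrite cards1 /deg in h1 *; rewrite -h1; lia.
Qed.

Unset Implicit Arguments.

Theorem lemma2p1 (T : finType) (e : rel T) (n : nat) (beta : nat) (u v : T) :
  simple_graph e ->
  2 <= n ->
  #|T| = 2 * n + 1 ->
  n ^ 2 + n <= nedges e ->
  (forall a b : T, a != b -> deg e a = deg e b -> ~ path3 e a b) ->
  (* beta is the largest integer such that two distinct vertices have degree beta *)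
  (exists a b : T, [/\ a != b, deg e a = beta & deg e b = beta]) ->
  (forall (k : nat) (a b : T), a != b -> deg e a = k -> deg e b = k -> k <= beta) ->
  u != v -> deg e u = beta -> deg e v = beta ->
  let c := beta - n - ind e u v in
  1 <= beta - n - ind e u v ->  (* c >= 1, i.e. beta >= n + 1_{uv} + 1 *)
  n ^ 2 + c ^ 2 - c - ind e u v <= nedges_compl e.
Proof.
move=> sg n2 cardT _ noP _ _ uv du dv c hc.
rewrite /c {c}.
have hcc := compl_count sg.
case: sg => esym eirr.
have Hp : forall a x y b, deg e a = deg e b -> uniq [:: a; x; y; b] ->
    e a x -> e x y -> e y b -> False.
  move=> a x y b dab U h1 h2 h3.
  have ab : a != b by apply: contraTneq U => ->; rewrite /= !inE eqxx !orbT.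
  by apply: (noP a b ab dab); exists x, y; split.
have duv : deg e u = deg e v by rewrite du dv.
have neq : forall x y, e x y -> x != y by move=> x y; apply: contraTneq => ->; rewrite eirr.
have [A [inA cA]] : exists A : {set T},
    (forall z, (z \in A) = (z != v) && e u z) /\ #|A| + e u v = deg e u.
  exists ([set y | e u y] :\ v); split; first by move=> z; rewrite !inE.
  by rewrite /deg (cardsD1 v [set y | e u y]) inE addnC.
have [B [inB cB]] : exists B : {set T},
    (forall z, (z \in B) = (z != u) && e v z) /\ #|B| + e u v = deg e v.
  exists ([set y | e v y] :\ u); split; first by move=> z; rewrite !inE.
  by rewrite /deg (cardsD1 u [set y | e v y]) inE addnC esym.
have uA : u \notin A by rewrite inA eirr andbF.
have vA : v \notin A by rewrite inA eqxx.
have uB : u \notin B by rewrite inB eqxx.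
have vB : v \notin B by rewrite inB eirr andbF.
have [W [inW cW]] : exists W : {set T},
    (forall z, (z \in W) = [&& z \notin A, z \notin B, z != u & z != v]) /\
    #|W| + #|A :|: B| + 2 = #|T|.
  exists (~: (A :|: B :|: [set u; v])); split.
    by move=> z; rewrite !inE !negb_or -!andbA.
  have h := cardsC (A :|: B :|: [set u; v]).
  rewrite cardsU_disj ?cards2 ?uv in h; first by rewrite -h; lia.
  move=> z; rewrite !inE => /orP [] hz /orP [] /eqP ez; subst z.
  - by rewrite (negbTE uA) in hz.
  - by rewrite (negbTE vA) in hz.
  - by rewrite (negbTE uB) in hz.
  - by rewrite (negbTE vB) in hz.
have FAB : forall x z, x \in A -> z \in B -> x != z -> ~~ e x z.
  move=> x z xA zB xz; apply/negP => exz.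
  move: (xA) (zB); rewrite inA inB => /andP [xv ux] /andP [zu vz].
  apply: (Hp u x z v duv) => //; last by rewrite esym.
  rewrite /= !inE !negb_or (neq _ _ ux) xz xv uv /= andbT.
  by rewrite eq_sym zu /= eq_sym (neq _ _ vz).
set dW := fun x => #|[set z | e x z] :&: W|.
have degI : forall x, x \in A :&: B -> deg e x = dW x + 2.
  move=> x; rewrite inE => /andP [xA xB].
  have -> : deg e x = #|([set z | e x z] :&: W) :|: [set u; v]|.
    rewrite /deg; apply: eq_card => y; rewrite !inE inW.
    case: (eqVneq y u) => [->|yu].
      by move: xA; rewrite inA esym => /andP [_ ->]; rewrite orbT.
    case: (eqVneq y v) => [->|yv].
      by move: xB; rewrite inB esym => /andP [_ ->]; rewrite !orbT.
    rewrite !orbF andbT; case exy: (e x y); last by [].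
    rewrite /=; symmetry; apply/andP; split.
      apply/negP => yA.
      have : y != x by apply: contraTneq exy => ->; rewrite eirr.
      by move/(FAB y x yA xB); rewrite esym exy.
    apply/negP => yB.
    have : x != y by apply: neq.
    by move/(FAB x y xA yB); rewrite exy.
  rewrite cardsU_disj ?cards2 ?uv //.
  by move=> z; rewrite !inE inW => /andP [_ /and4P [_ _ zu zv]] /orP [] /eqP ez;
    [rewrite ez eqxx in zu | rewrite ez eqxx in zv].
have dWw : forall x, dW x <= #|W| by move=> x; apply: subset_leq_card; apply: subsetIr.
have cUI := cardsUI A B.
have hind : ind e u v = e u v by rewrite /ind; case: (e u v).
rewrite hind in hc *.
rewrite cardT in cW.
case euv: (e u v) hc cA cB => /= hc cA cB.
  exfalso.
  have hw : #|W|.+1 < #|A :&: B| by clear -cW cUI cA cB hc du dv; lia.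
  have [x [y [xI yI xy dxy]]] := pigeon (fun x _ => dWw x) hw.
  move: (xI) (yI); rewrite !inE !inA !inB => /andP [/andP [xv ux] _] /andP [_ /andP [yu vy]].
  apply: (Hp x u v y); first by rewrite !degI // dxy.
  - rewrite /= !inE !negb_or xy xv uv /= andbT eq_sym (neq _ _ ux) /=.
    by rewrite eq_sym yu (neq _ _ vy).
  - by rewrite esym.
  - exact: euv.
  - exact: vy.
rewrite !subn0.
have WnA : forall a x, a \in W -> x \in A -> x != a.
  by move=> a x; rewrite inW => /and4P [aA _ _ _] xA; apply: contraNneq aA => <-.
have WnB : forall a x, a \in W -> x \in B -> x != a.
  by move=> a x; rewrite inW => /and4P [_ aB _ _] xB; apply: contraNneq aB => <-.
have hIW : #|W| + 2 <= #|A :&: B| by clear -cW cUI cA cB hc du dv; lia.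
have hcl := claim eirr hIW.
have {hcl} hcl : 2 * \sum_(x in A :&: B) dW x + \sum_(a in W) dW a <= 2 * #|A :&: B| * #|W|.
  apply: hcl => x y a b xI yI xy dxy aW bW ab xa ab' yb.
  have xA : x \in A by move: xI; rewrite inE => /andP [].
  have yB : y \in B by move: yI; rewrite inE => /andP [].
  apply: (Hp x a b y); first by rewrite !degI // /dW dxy.
  - rewrite /= !inE !negb_or (WnA _ _ aW xA) (WnA _ _ bW xA) xy ab /= andbT.
    by rewrite eq_sym (WnB _ _ aW yB) eq_sym (WnB _ _ bW yB).
  - exact: xa.
  - exact: ab'.
  - by rewrite esym.
set I := A :&: B.
pose bnd x := (if x == u then beta else 0) + (if x == v then beta else 0)
  + (if x \in I then dW x + 2 else 0)
  + (if x \in A :\: B then 2 * n + 1 - #|B| - 2 else 0)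
  + (if x \in B :\: A then 2 * n + 1 - #|A| - 2 else 0)
  + (if x \in W then #|[set z | e x z] :&: I| + (#|A :\: B| + #|B :\: A|) + dW x else 0).
have pw : forall x, deg e x <= bnd x.
  move=> x; rewrite /bnd.
  case: (eqVneq x u) => [->|xu]; first by rewrite du -!addnA leq_addr.
  case: (eqVneq x v) => [->|xv].
    have vu : (v == u) = false by apply/negbTE; rewrite eq_sym.
    by rewrite dv add0n -!addnA leq_addr.
  rewrite add0n add0n.
  case xA: (x \in A); case xB: (x \in B).
  - by rewrite /I !inE xA xB /= degI ?inE ?xA ?xB // !addn0 leq_addr.
  - rewrite /I !inE inW xA xB /= add0n !addn0.
    have h : #|[set z | e x z] :|: (B :|: [set x; v])| = deg e x + (#|B| + 2).
      rewrite cardsU_disj; last first.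
        move=> z; rewrite !inE => exz /orP [zB|/orP [] /eqP ez].
        - have xz : x != z by apply: contraTneq zB => <-; rewrite xB.
          by move: (FAB x z xA zB xz); rewrite exz.
        - by rewrite ez eirr in exz.
        - by move: xB; rewrite inB xu /= esym -ez exz.
      rewrite cardsU_disj ?cards2; last first.
        move=> z zB; rewrite !inE => /orP [] /eqP ez; subst z; by rewrite ?xB ?(negbTE vB) in zB.
      suff -> : x != v by [].
      exact: xv.
    have := max_card ([set z | e x z] :|: (B :|: [set x; v])).
    rewrite h cardT => hh; clear -hh; lia.
  - rewrite /I !inE inW xA xB /= add0n !addn0.
    have h : #|[set z | e x z] :|: (A :|: [set x; u])| = deg e x + (#|A| + 2).
      rewrite cardsU_disj; last first.
        move=> z; rewrite !inE => exz /orP [zA|/orP [] /eqP ez].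
        - have zx : z != x by apply: contraTneq zA => ->; rewrite xA.
          by move: (FAB z x zA xB zx); rewrite esym exz.
        - by rewrite ez eirr in exz.
        - by move: xA; rewrite inA xv /= esym -ez exz.
      rewrite cardsU_disj ?cards2; last first.
        move=> z zA; rewrite !inE => /orP [] /eqP ez; subst z; by rewrite ?xA ?(negbTE uA) in zA.
      suff -> : x != u by [].
      exact: xu.
    have := max_card ([set z | e x z] :|: (A :|: [set x; u])).
    rewrite h cardT => hh; clear -hh; lia.
  - rewrite /I !inE inW xA xB xu xv /= !add0n.
    set X := [set z | e x z] :&: (A :&: B).
    set Y := (A :\: B) :|: (B :\: A).
    set Z := [set z | e x z] :&: W.
    have sub : [set z | e x z] \subset X :|: Y :|: Z.
      apply/subsetP => z; rewrite /X /Y /Z !inE inW => exz.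
      have zu : z != u.
        apply: contraFneq xA => zu; rewrite inA xv /= esym -zu //.
      have zv : z != v.
        apply: contraFneq xB => zv; rewrite inB xu /= esym -zv //.
      rewrite exz zu zv /=.
      by case: (z \in A); case: (z \in B).
    have h1 := subset_leq_card sub.
    have h2 := (leq_card_setU (X :|: Y) Z).1.
    have h3 := (leq_card_setU X Y).1.
    have h4 := (leq_card_setU (A :\: B) (B :\: A)).1.
    rewrite -/Y in h4.
    rewrite /deg /dW -/Z; clear -h1 h2 h3 h4; lia.
have hs : \sum_x deg e x <= \sum_x bnd x by apply: leq_sum => x _; exact: pw.
rewrite /bnd !big_split /= -!big_mkcond /= !big_pred1_eq !sum_nat_const in hs.
rewrite !big_split /= !sum_nat_const (double_count _ _ esym) in hs.
have cAB : #|A :\: B| = #|A| - #|I| by rewrite cardsD.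
have cBA : #|B :\: A| = #|B| - #|I| by rewrite cardsD setIC.
rewrite cAB cBA in hs.
rewrite cardT in hcc.
have iA : #|I| <= #|A| by apply: subset_leq_card; apply: subsetIl.
move: hs hcc hcl cW cUI cA cB hc hIW du dv iA.
rewrite -/I.
set SI := \sum_(x in I) _; set SW := \sum_(x in W) _; set Sd := \sum_x _.
set i := #|I|; set w := #|W|; set a := #|A|; set b := #|B|; set ab := #|A :|: B|.
set NC := nedges_compl e; set du' := deg e u; set dv' := deg e v.
clearbody SI SW Sd i w a b ab NC du' dv'.
move=> hs hcc hcl cW cUI cA cB hc hIW du dv iA.
have ha : a = beta by lia.
have hb : b = beta by lia.
subst a b; clear cA cB du dv.
have [c hcb] : exists c, beta = n + c.+1 by exists (beta - n).-1; lia.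
subst beta.
have -> : n + c.+1 - n = c.+1 by lia.

have [k hk] : exists k, n + c.+1 = i + k by exists (n + c.+1 - i); lia.
have hi : i = w + 2 * c.+1 + 1 by lia.
subst i.
have hn : n = w + c.+1 + 1 + k by lia.
subst n.
have e1 : w + 2 * c.+1 + 1 + k - (w + 2 * c.+1 + 1) = k by lia.
rewrite hk e1 in hs.
have e2 : 2 * (w + c.+1 + 1 + k) + 1 - (w + 2 * c.+1 + 1 + k) - 2 = w + k by lia.
rewrite e2 in hs.
have e3 : 2 * (w + c.+1 + 1 + k) + 1 - 1 = 2 * (w + c.+1 + 1 + k) by lia.
rewrite e3 in hcc.
have e4 : c.+1 ^ 2 - c.+1 = c.+1 * c by rewrite expnS expn1 mulnS addKn.
rewrite -addnBA; last by rewrite expnS expn1 leq_pmull.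
rewrite e4.
nia.
Qed.
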